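(* Let $\phi$ be a topological flow on a compact metric space $(M,\mathrm{dist})$, let $K\subset M\setminus\mathrm{Sing}(\phi)$ be compact, let $T_0\in(0,1)$ satisfy $\phi(t,x)\neq x$ for all $t\in(0,2T_0]$ and $x\in K$, and let $\tilde K=\bigcap_{t\in[-2T_0,2T_0]}\phi(t,K)$. Then for every $\varepsilon>0$ there exists $\varepsilon_1>0$ with the following property: if $\xi\in\mathcal{P}$, $t_0\in\mathbb{R}$, $T_1\ge T_0$, $g\in\mathrm{Rep}$ with $g(0)=0$, and $y\in M$ satisfy $\mathrm{dist}(\xi(t+t_0),\phi(g(t),y))<\varepsilon_1$ and $\xi(t+t_0),\ \phi(g(t),y)\in\tilde K$ for all $t\in[0,T_1]$, then there exists $\tilde g\in\mathrm{Rep}(\varepsilon)$ with $\tilde g(0)=g(0)$ and $\tilde g(T_1)=g(T_1)$ such that $\mathrm{dist}(\xi(t+t_0),\phi(\tilde g(t),y))<\varepsilon$ for all $t\in[0,T_1]$.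
   Context: A topological flow is a continuous $\phi:\mathbb{R}\times M\to M$ with $\phi(0,x)=x$, $\phi(s+t,x)=\phi(s,\phi(t,x))$; $\mathrm{Sing}(\phi)$ is its set of fixed points. $\mathcal{P}$ denotes the set of all functions $\xi:\mathbb{R}\to M$ with $\xi(t+nT_0)=\phi(t,\xi(nT_0))$ for all $t\in[0,T_0)$ and $n\in\mathbb{Z}$. $\mathrm{Rep}$ is the set of orientation-preserving homeomorphisms of $\mathbb{R}$, and $\mathrm{Rep}(\varepsilon)=\{f\in\mathrm{Rep}: |\frac{f(a)-f(b)}{a-b}-1|<\varepsilon\ \forall a>b\}$. *)

(* Defs.v *)
From HB Require Import structures.
From mathcomp Require Import all_boot all_order all_algebra.
From mathcomp Require Import all_classical all_reals all_analysis.
Set Implicit Arguments. Unset Strict Implicit. Unset Printing Implicit Defensive.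
Import Order.TTheory GRing.Theory Num.Theory.
Import numFieldTopology.Exports.
Local Open Scope classical_set_scope.
Local Open Scope ring_scope.

Definition is_flow {R : realType} {M : metricType R} (phi : R -> M -> M) : Prop :=
  continuous (fun p : R * M => phi p.1 p.2) /\
  (forall x, phi 0 x = x) /\
  (forall s t x, phi (s + t) x = phi s (phi t x)).

Definition Sing {R : realType} {M : metricType R} (phi : R -> M -> M) : set M :=
  [set x | forall t, phi t x = x].

Definition in_P {R : realType} {M : metricType R} (phi : R -> M -> M) (T0 : R)
  (xi : R -> M) : Prop :=
  forall (n : int) (t : R), 0 <= t -> t < T0 ->
    xi (t + n%:~R * T0) = phi t (xi (n%:~R * T0)).

Definition is_Rep {R : realType} (f : R -> R) : Prop :=
  (exists h : R -> R, cancel f h /\ cancel h f /\ continuous f /\ continuous h) /\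
  (forall a b, a < b -> f a < f b).

Definition is_Rep_eps {R : realType} (eps : R) (f : R -> R) : Prop :=
  is_Rep f /\ (forall a b, b < a -> `|(f a - f b) / (a - b) - 1| < eps).

(* Main.v *)
Require Import Defs.
From HB Require Import structures.
From mathcomp Require Import all_boot all_order all_algebra.
From mathcomp Require Import all_classical all_reals all_analysis.
From mathcomp Require Import ring lra.
Import Order.TTheory GRing.Theory Num.Theory Num.Def.
Import numFieldTopology.Exports.
Local Open Scope classical_set_scope.
Local Open Scope ring_scope.
Lemma nbhs_prod_ball (R : realType) (M : metricType R) (s : R) (p : M) (A : set (R * M)) :
  nbhs (s, p) A -> exists2 r, 0 < r & forall s1 p1, `|s - s1| < r -> mdist p p1 < r -> A (s1, p1).
Proof.
case => /= -[A1 A2] /= [nA1 nA2] sub.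
move/nbhs_ballP: nA1 => [r1 r10 b1].
move/nbhs_ballP: nA2 => [r2 r20 b2].
exists (minr r1 r2); first by rewrite lt_min r10 r20.
move=> s1 p1; rewrite !lt_min => /andP[h1 _] /andP[_ h2].
apply: sub; split; [apply: b1 | apply: b2]; rewrite ?ballEmdist //.
Qed.

Lemma prod_ball_nbhs (R : realType) (M : metricType R) (s : R) (p : M) r :
  0 < r -> nbhs (s, p) [set x | `|s - x.1| < r /\ mdist p x.2 < r].
Proof.
move=> r0. exists (ball s r, ball p r); first by split; apply: nbhsx_ballx.
case=> s1 p1 /= [h1 h2]; split => //. by move: h2; rewrite ballEmdist.
Qed.

Lemma unif_flow (R : realType) (M : metricType R) (phi : R -> M -> M) :
  continuous (fun p : R * M => phi p.1 p.2) -> compact [set: M] ->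
  forall eta, 0 < eta -> exists2 rho, 0 < rho & forall s s' p q, `|s| <= 1 ->
    `|s - s'| < rho -> mdist p q < rho -> mdist (phi s p) (phi s' q) < eta.
Proof.
move=> cphi cM eta eta0.
have cpt : compact ((`[-1, 1]%classic : set R) `*` [set: M]) by apply: compact_setX => //; exact: segment_compact.
move/compact_near_coveringP: cpt => cov.
pose P := fun rho (x : R * M) => forall s' q, `|x.1 - s'| < rho -> mdist x.2 q < rho ->
   mdist (phi x.1 x.2) (phi s' q) < eta.
have := cov R (0:R)^'+ P _.
case.
- case=> s p /= [_ _].
  have := cphi (s, p); move/cvg_ballP => /(_ (eta/2) _) H.
  have {H} := H (ltac:(by rewrite divr_gt0)).
  move/nbhs_prod_ball => [r0 r00 Hr].
  exists ([set x | `|s - x.1| < r0/2 /\ mdist p x.2 < r0/2], [set i | 0 < i < r0/2]).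
    split; first by apply: prod_ball_nbhs; rewrite divr_gt0.
    near=> i. apply/andP; split. near: i. exact: nbhs_right_gt.
    near: i. apply: nbhs_right_lt. by rewrite divr_gt0.
  case=> -[s1 p1] i /= [[h1 h2] /andP[i0 ir]] s' q hs hq.
  have e1 : mdist (phi s p) (phi s1 p1) < eta/2.
    have hr : r0/2 < r0 by lra.
    have := Hr s1 p1 (lt_trans h1 hr) (lt_trans h2 hr).
    by rewrite ballEmdist.
  have e2 : mdist (phi s p) (phi s' q) < eta/2.
    have hs' : `|s - s'| < r0.
      apply: le_lt_trans (ler_distD s1 _ _) _.
      have := ltrD h1 (lt_trans hs ir). lra.
    have hq' : mdist p q < r0.
      apply: le_lt_trans (metric_triangle _ p1 _) _.
      have := ltrD h2 (lt_trans hq ir). lra.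
    have := Hr s' q hs' hq'.
    by rewrite ballEmdist.
  apply: le_lt_trans (metric_triangle _ (phi s p) _) _.
  rewrite metric_sym. lra.
- move=> x /= x0 H; exists (x/2); first by rewrite divr_gt0.
  move=> s s' p q hs hss hpq.
  have hb : ball_ normr 0 x (x/2).
    rewrite /ball_ /= sub0r normrN gtr0_norm; [lra | by rewrite divr_gt0].
  apply: (H _ hb (ltac:(by rewrite divr_gt0)) (s, p)) => //.
  split => //=. rewrite in_itv /=; move: hs; rewrite ler_norml. done.
Unshelve. all: by end_near.
Qed.

Lemma gap_lemma (R : realType) (M : metricType R) (phi : R -> M -> M) (K : set M) (d : R) :
  continuous (fun p : R * M => phi p.1 p.2) -> compact [set: M] -> compact K ->
  `|d| <= 1 -> (forall z, K z -> phi d z <> z) ->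
  exists2 c, 0 < c & forall z, K z -> c <= mdist (phi d z) z.
Proof.
move=> cphi cM cK hd hfix.
move/compact_near_coveringP: cK => cov.
have := cov R (0:R)^'+ (fun c z => c <= mdist (phi d z) z) _.
case.
- move=> z Kz.
  pose D := mdist (phi d z) z.
  have D0 : 0 < D by rewrite /D mdist_gt0; apply/eqP; exact: hfix.
  have [rho rho0 Hr] := @unif_flow _ _ phi cphi cM _ (ltac:(by rewrite divr_gt0) : 0 < D/4).
  exists ([set z' | mdist z z' < minr rho (D/4)], [set c | 0 < c < D/2]).
    split.
      apply/nbhs_ballP; exists (minr rho (D/4)); first by rewrite /= lt_min rho0 divr_gt0.
      by move=> z'; rewrite ballEmdist.
    simpl. near=> i. apply/andP; split. near: i. exact: nbhs_right_gt.
    near: i. apply: nbhs_right_lt. by rewrite divr_gt0.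
  case=> z' c /= [h1 /andP[c0 cD]].
  move: h1; rewrite lt_min => /andP[h1 h2].
  have e1 := Hr d d z z' hd (ltac:(by rewrite subrr normr0)) h1.
  have t1 : D <= mdist (phi d z) (phi d z') + mdist (phi d z') z.
    exact: metric_triangle.
  have t2 : mdist (phi d z') z <= mdist (phi d z') z' + mdist z' z.
    exact: metric_triangle.
  rewrite (metric_sym z' z) in t2.
  rewrite -/D in e1. lra.
- move=> x /= x0 H; exists (x/2); first by rewrite divr_gt0.
  move=> z Kz.
  have hb : ball_ normr 0 x (x/2).
    rewrite /ball_ /= sub0r normrN gtr0_norm; [lra | by rewrite divr_gt0].
  exact: (H _ hb (ltac:(by rewrite divr_gt0)) z Kz).
Unshelve. all: by end_near.
Qed.

Lemma lip_cont (R : realType) (f : R -> R) (C : R) : 0 <= C ->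
  (forall x y, `|f x - f y| <= C * `|x - y|) -> continuous f.
Proof.
move=> C0 H x; apply/cvgrPdist_lt => e e0.
apply/nbhs_ballP; exists (e / (C + 1)); first by rewrite /= divr_gt0 // ltr_wpDl.
move=> t; rewrite /ball /= => h.
have h' : `|x - t| * (C + 1) < e by rewrite -ltr_pdivlMr // ltr_wpDl.
apply: le_lt_trans (H x t) _.
have := normr_ge0 (x - t). nra.
Qed.

Lemma rep_of_lip (R : realType) (f : R -> R) (k : R) : 0 <= k -> k < 1 ->
  (forall a b, b < a -> `|(f a - f b) - (a - b)| <= k * (a - b)) -> is_Rep f.
Proof.
move=> k0 k1 H.
have Hl : forall a b, b <= a -> (1 - k) * (a - b) <= f a - f b /\ f a - f b <= (1 + k) * (a - b).
  move=> a b; rewrite le_eqVlt => /orP[/eqP->| ba]; first by rewrite !subrr !mulr0 lexx.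
  have := H a b ba; rewrite ler_norml => /andP[h1 h2]. split; nra.
have inc : forall a b, a < b -> f a < f b.
  move=> a b ab; have [h1 _] := Hl b a (ltW ab).
  have : 0 < (1 - k) * (b - a) by rewrite mulr_gt0 // subr_gt0.
  lra.
have lip : forall x y, `|f x - f y| <= (1 + k) * `|x - y|.
  move=> x y; case: (leP y x) => yx.
    have [h1 h2] := Hl x y yx. rewrite !ger0_norm ?subr_ge0 //; nra.
  have [h1 h2] := Hl y x (ltW yx). rewrite (distrC (f x)) (distrC x).
  rewrite !ger0_norm ?subr_ge0 //; try (exact: ltW); nra.
have colip : forall x y, (1 - k) * `|x - y| <= `|f x - f y|.
  move=> x y; case: (leP y x) => yx.
    have [h1 h2] := Hl x y yx. rewrite !ger0_norm ?subr_ge0 //; nra.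
  have [h1 h2] := Hl y x (ltW yx). rewrite (distrC (f x)) (distrC x).
  rewrite !ger0_norm ?subr_ge0 //; try (exact: ltW); nra.
have cf : continuous f by apply: (@lip_cont _ f (1 + k)) => //; lra.
have surj : forall y, exists x, f x = y.
  move=> y; pose A := `|y - f 0| / (1 - k).
  have A0 : 0 <= A by rewrite divr_ge0 // subr_ge0 ltW.
  have hA : (1 - k) * A = `|y - f 0| by rewrite /A mulrC -mulrA mulVf ?mulr1 // subr_eq0 gt_eqF.
  have [h1 _] := Hl A 0 A0. have [h2 _] := Hl 0 (- A) (ltac:(by rewrite oppr_le0)).
  rewrite subr0 in h1; rewrite sub0r opprK in h2.
  have := ler_norml (y - f 0) `|y - f 0|; rewrite lexx => /esym/andP[n1 n2].
  have [c _ fc] : exists2 c, c \in `[- A, A] & f c = y.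
    apply: IVT; first lra.
      exact: continuous_subspaceT.
    apply/andP; split.
      by rewrite ge_min; apply/orP; left; lra.
    by rewrite le_max; apply/orP; right; lra.
  by exists c.
have [h hK] := choice surj.
have finj : injective f.
  move=> a b fab; case: (ltgtP a b) => // ab; have := inc _ _ ab; rewrite fab ltxx //.
split => //.
exists h; split; first by move=> x; apply: finj; rewrite hK.
split; first by [].
split => //.
apply: (@lip_cont _ h (1 - k)^-1); first by rewrite invr_ge0 subr_ge0 ltW.
move=> x y; have := colip (h x) (h y); rewrite !hK => hc.
by rewrite ler_pdivlMl ?subr_gt0.
Qed.

Lemma far_bound (R : realType) (G : R -> R) (T0 T1 dl : R) : 0 < T0 -> 0 <= dl ->
  (forall a b, 0 <= a -> a <= b -> b <= T1 -> b - a <= T0 -> `|G b - G a| <= 2 * dl) ->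
  forall s t, 0 <= s -> s <= t -> t <= T1 -> `|G t - G s| <= 2 * dl + (2 * dl / T0) * (t - s).
Proof.
move=> T00 dl0 H.
have LT : (2 * dl / T0) * T0 = 2 * dl by rewrite -mulrA mulVf ?mulr1 // gt_eqF.
have L0 : 0 <= 2 * dl / T0 by rewrite divr_ge0 // ?mulr_ge0 // ltW.
suff : forall n : nat, forall s t, 0 <= s -> s <= t -> t <= T1 -> t - s <= n%:R * T0 ->
  `|G t - G s| <= 2 * dl + (2 * dl / T0) * (t - s).
  move=> Hn s t s0 st tT.
  have q0 : 0 <= (t - s) / T0 by rewrite divr_ge0 ?subr_ge0 // ltW.
  have := archi_boundP q0; set n := archi_bound _ => hn.
  apply: (Hn n) => //. rewrite -ler_pdivrMr //. exact: ltW.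
elim=> [|n IH] s t s0 st tT.
  rewrite mul0r subr_le0 => ts. have -> : t = s by apply/le_anti; rewrite ts st.
  rewrite !subrr normr0 mulr0 addr0. by rewrite mulr_ge0.
move=> tsn.
case: (leP (t - s) T0) => hts.
  have := H s t s0 st tT hts. have : 0 <= 2 * dl / T0 * (t - s) by rewrite mulr_ge0 // subr_ge0.
  lra.
have h1 := H s (s + T0) s0 (ltac:(lra)) (ltac:(lra)) (ltac:(lra)).
have h2 := IH (s + T0) t (ltac:(lra)) (ltac:(lra)) tT (ltac:(rewrite -natr1 mulrDl mul1r in tsn; lra)).
have e : 2 * dl / T0 * (t - s) = 2 * dl / T0 * (t - (s + T0)) + 2 * dl.
  lra.
rewrite e.
have := ler_distD (G (s + T0)) (G t) (G s).
lra.
Qed.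

Lemma mcshane (R : realType) (G : R -> R) (T0 T1 dl : R) : 0 < T0 -> T0 <= T1 -> 0 <= dl -> G 0 = 0 ->
  (forall a b, 0 <= a -> a <= b -> b <= T1 -> b - a <= T0 -> `|G b - G a| <= 2 * dl) ->
  exists D : R -> R, D 0 = 0 /\ D T1 = G T1 /\
     (forall a b, `|D a - D b| <= (4 * dl / T0) * `|a - b|) /\
     (forall t, 0 <= t <= T1 -> `|D t - G t| <= 2 * dl).
Proof.
move=> T00 T01 dl0 G0 H.
have far := @far_bound R G T0 T1 dl T00 dl0 H.
pose L := 2 * dl / T0.
have L0 : 0 <= L by rewrite /L divr_ge0 // ?mulr_ge0 // ltW.
have LT : L * T0 = 2 * dl by rewrite /L -mulrA mulVf ?mulr1 // gt_eqF.
have far2 : forall s t, 0 <= s <= T1 -> 0 <= t <= T1 -> `|G t - G s| <= 2 * dl + L * `|t - s|.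
  move=> s t /andP[s0 s1] /andP[t0 t1]; case: (leP s t) => st.
    by rewrite (ger0_norm (x := t - s)) ?subr_ge0 //; apply: far.
  rewrite distrC (distrC t) (gtr0_norm (x := s - t)) ?subr_gt0 //; apply: far => //; exact: ltW.
pose S t := [set v | exists2 s, 0 <= s <= T1 & v = G s + L * `|t - s|].
pose D0 t := inf (S t).
have Sne : forall t, S t !=set0.
  move=> t; exists (G 0 + L * `|t - 0|); exists 0 => //; rewrite lexx /=; lra.
have Slb : forall t, has_lbound (S t).
  move=> t; exists (- (2 * dl) - L * `|t|) => v [s hs ->].
  have := far2 0 s (ltac:(rewrite lexx; lra)) hs; rewrite G0 subr0 subr0 => h.
  have : `|s| <= `|t - s| + `|t|.
    have := ler_normD (s - t) t. by rewrite subrK distrC.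
  move=> hs2. have := ler_wpM2l L0 hs2. move: h. rewrite ler_norml => /andP[h _]. nra.
have Dle : forall t, 0 <= t <= T1 -> D0 t <= G t.
  move=> t ht; apply: ge_inf => //; exists t => //; rewrite subrr normr0 mulr0 addr0 //.
have Dge : forall t, 0 <= t <= T1 -> G t - 2 * dl <= D0 t.
  move=> t ht; apply: lb_le_inf => // v [s hs ->].
  have := far2 s t hs ht; rewrite ler_norml => /andP[_ h]. lra.
have Dlip : forall a b, D0 a - D0 b <= L * `|a - b|.
  move=> a b; suff : D0 a - L * `|a - b| <= D0 b by lra.
  apply: lb_le_inf => // v [s hs ->].
  have h0 : D0 a <= G s + L * `|a - s|.
    apply: (ge_inf (Slb a)). exact: (ex_intro2 _ _ s hs erefl).
  have h := ler_distD b a s.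
  have := ler_wpM2l L0 h. lra.
pose be := (G T1 - D0 T1 + D0 0) / T1.
have T10 : 0 < T1 by lra.
have hT1 : 0 <= T1 <= T1 by apply/andP; split; lra.
have h00 : (0:R) <= 0 <= T1 by apply/andP; split; lra.
have d1 := Dle _ hT1. have d2 := Dge _ hT1. have d3 := Dle _ h00. have d4 := Dge _ h00.
rewrite G0 in d3 d4.
have beT : be * T1 = G T1 - D0 T1 + D0 0 by rewrite /be -mulrA mulVf ?mulr1 // gt_eqF.
clearbody be.
have beb : `|be| <= L.
  rewrite -(ler_pM2r T10).
  have e1 : `|be| * T1 = `|be * T1| by rewrite normrM (gtr0_norm T10).
  have : L * T0 <= L * T1 by rewrite ler_wpM2l.
  rewrite e1 beT ler_norml => ?. apply/andP; split; lra.
exists (fun t => D0 t - D0 0 + be * t).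
split; first by rewrite mulr0 subrr addr0.
split; first by rewrite beT; lra.
split.
  move=> a b.
  have e : D0 a - D0 0 + be * a - (D0 b - D0 0 + be * b) = (D0 a - D0 b) + be * (a - b) by lra.
  rewrite e.
  have h1 : `|D0 a - D0 b| <= L * `|a - b|.
    rewrite ler_norml Dlip andbT. have := Dlip b a. rewrite distrC. lra.
  have h2 : `|be * (a - b)| <= L * `|a - b| by rewrite normrM ler_wpM2r.
  have -> : 4 * dl / T0 = L + L by rewrite /L; lra.
  apply: le_trans (ler_normD _ _) _. lra.
move=> t ht. have := Dle t ht. have := Dge t ht. move: ht => /andP[t0 t1].
have lam0 : 0 <= t / T1 by rewrite divr_ge0 // ltW.
have lam1 : t / T1 <= 1 by rewrite ler_pdivrMr // mul1r.
have ebt : be * t = (G T1 - D0 T1 + D0 0) * (t / T1).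
  have T1n : T1 != 0 by rewrite gt_eqF.
  by rewrite -beT; field.
rewrite ebt ler_norml. nra.
Qed.

Theorem proposition2p1 (R : realType) (M : metricType R) (phi : R -> M -> M)
  (K : set M) (T0 : R) :
  is_flow phi ->
  compact [set: M] ->
  compact K ->
  K `<=` ~` Sing phi ->
  0 < T0 -> T0 < 1 ->
  (forall t x, 0 < t -> t <= 2 * T0 -> K x -> phi t x <> x) ->
  let Kt := \bigcap_(t in [set t : R | - (2 * T0) <= t <= 2 * T0]) (phi t @` K) in
  forall eps : R, 0 < eps ->
  exists eps1 : R, 0 < eps1 /\
    forall (xi : R -> M) (t0 T1 : R) (g : R -> R) (y : M),
      in_P phi T0 xi -> T0 <= T1 -> is_Rep g -> g 0 = 0 ->
      (forall t, 0 <= t <= T1 ->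
         mdist (xi (t + t0)) (phi (g t) y) < eps1 /\
         Kt (xi (t + t0)) /\ Kt (phi (g t) y)) ->
      exists gt : R -> R,
        is_Rep_eps eps gt /\ gt 0 = g 0 /\ gt T1 = g T1 /\
        (forall t, 0 <= t <= T1 -> mdist (xi (t + t0)) (phi (gt t) y) < eps).
Proof.
move=> [cphi [phi0 phiD]] cM cK _ T00 T01 nofix Kt eps eps0.
have KtK : forall w r, Kt w -> -(2*T0) <= r <= 2*T0 -> K (phi r w).
  move=> w r Kw hr.
  have hr' : - (2 * T0) <= - r <= 2 * T0.
    move: hr => /andP[h1 h2]; apply/andP; split; lra.
  have [k Kk <-] := Kw (- r) hr'.
  by rewrite -phiD addrN phi0.
pose e := minr eps (1/2).
have e0 : 0 < e by rewrite lt_min eps0 /=; lra.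
have e1 : e <= eps by rewrite ge_min lexx.
have e2 : e <= 1/2 by rewrite ge_min lexx orbT.
have [rho2 rho20 Hr2] := @unif_flow _ _ phi cphi cM (eps/2) (ltac:(lra)).
pose dl := minr (e * T0 / 8) (rho2 / 4).
have dl0 : 0 < dl by rewrite lt_min; apply/andP; split; [rewrite divr_gt0 // mulr_gt0 | lra].
have dl1 : dl <= e * T0 / 8 by rewrite ge_min lexx.
have dl2 : dl <= rho2 / 4 by rewrite ge_min lexx orbT.
have eT : e * T0 <= T0 by nra.
have dlT : dl <= T0 by lra.
have [c c0 Hc] := @gap_lemma _ _ phi K dl cphi cM cK (ltac:(rewrite ger0_norm; lra))
   (fun z Kz => nofix dl z dl0 (ltac:(lra)) Kz).
have [rho1 rho10 Hr1] := @unif_flow _ _ phi cphi cM (c/2) (ltac:(lra)).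
pose eps1 := minr (minr rho1 (c/2)) (eps/2).
have eps10 : 0 < eps1 by rewrite !lt_min rho10 /=; apply/andP; split; lra.
have eps11 : eps1 <= rho1 by rewrite !ge_min lexx.
have eps12 : eps1 <= c/2 by rewrite !ge_min lexx orbT.
have eps13 : eps1 <= eps/2 by rewrite !ge_min lexx orbT.
exists eps1; split => //.
move=> xi t0 T1 g y inP T0T1 repg g0 hyp.
have chunk : forall (n : int) a s, n%:~R * T0 <= a + t0 -> 0 <= s ->
    a + t0 + s < n%:~R * T0 + T0 -> xi (a + s + t0) = phi s (xi (a + t0)).
  move=> n a s h1 s0 h2.
  have := inP n (a + t0 - n%:~R * T0 + s) (ltac:(lra)) (ltac:(lra)).
  have := inP n (a + t0 - n%:~R * T0) (ltac:(lra)) (ltac:(lra)).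
  have -> : a + t0 - n%:~R * T0 + n%:~R * T0 = a + t0 by lra.
  have -> : a + t0 - n%:~R * T0 + s + n%:~R * T0 = a + s + t0 by lra.
  move=> -> ->. by rewrite -phiD addrC addrA.
case: repg => [[h [_ [_ [cg _]]]] incg].
have core : forall a L, 0 <= a -> 0 <= L -> a + L <= T1 -> L <= T0 ->
   (forall s, 0 <= s -> s < L -> xi (a + s + t0) = phi s (xi (a + t0))) ->
   forall s, 0 <= s -> s <= L -> `|g (a + s) - g a - s| <= dl.
  move=> a L a0 L0 aL LT0 orb s1 s10 s1L.
  rewrite leNgt; apply/negP => hs1.
  pose w := phi (g a) y.
  have [cl0 [_ Kw]] := hyp a (ltac:(apply/andP; split; lra)).
  have shift : forall u, phi (g a + u) y = phi u w by move=> u; rewrite addrC phiD.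
  have approx : forall s, 0 <= s -> s < L -> mdist (phi (g (a + s)) y) (phi s w) < c.
    move=> s s0 sL.
    have [cl _] := hyp (a + s) (ltac:(apply/andP; split; lra)).
    rewrite orb // in cl.
    have hs : `|s| <= 1 by rewrite ger0_norm //; lra.
    have := Hr1 s s (xi (a + t0)) w hs (ltac:(rewrite subrr normr0 //)) (ltac:(lra)).
    have := metric_triangle (phi (g (a + s)) y) (phi s (xi (a + t0))) (phi s w).
    rewrite metric_sym in cl. lra.
  pose f := fun s => g (a + s) - g a - s.
  have cf : continuous f.
    move=> x; apply: cvgB; last exact: cvg_id.
    apply: cvgB; last exact: cvg_cst.
    apply: continuous_comp; last exact: cg.
    apply: cvgD; [exact: cvg_cst | exact: cvg_id].
  have f0 : f 0 = 0 by rewrite /f addr0 subrr subr0.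
  have [hpos | hneg] : dl < f s1 \/ f s1 < - dl.
    move: hs1; rewrite /f ltr_normr => /orP[h1|h1]; [left|right]; lra.
  - have [s2 hs2 fs2] : exists2 s2, s2 \in `[0, s1] & f s2 = dl.
      apply: IVT => //; first exact: continuous_subspaceT.
      rewrite f0; apply/andP; split.
        by rewrite ge_min; apply/orP; left; lra.
      by rewrite le_max; apply/orP; right; lra.
    move: hs2; rewrite in_itv /= => /andP[s20 s21].
    have s2L : s2 < L.
      have : s2 != s1 by apply/eqP => es; rewrite es in fs2; lra.
      rewrite neq_lt => /orP[] ?; lra.
    have ga : g (a + s2) = g a + (dl + s2) by rewrite /f in fs2; lra.
    have Kz : K (phi s2 w) by apply: KtK => //; apply/andP; split; lra.
    have := Hc _ Kz. rewrite -phiD -shift -ga.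
    have := approx s2 s20 s2L. lra.
  - have [s2 hs2 fs2] : exists2 s2, s2 \in `[0, s1] & f s2 = - dl.
      apply: IVT => //; first exact: continuous_subspaceT.
      rewrite f0; apply/andP; split.
        by rewrite ge_min; apply/orP; right; lra.
      by rewrite le_max; apply/orP; left; lra.
    move: hs2; rewrite in_itv /= => /andP[s20 s21].
    have s2L : s2 < L.
      have : s2 != s1 by apply/eqP => es; rewrite es in fs2; lra.
      rewrite neq_lt => /orP[] ?; lra.
    have ga : g (a + s2) = g a + (s2 - dl) by rewrite /f in fs2; lra.
    have Kz : K (phi (s2 - dl) w) by apply: KtK => //; apply/andP; split; lra.
    have := Hc _ Kz. rewrite -phiD.
    have -> : dl + (s2 - dl) = s2 by lra.
    rewrite -[phi (s2 - dl) w]shift -ga metric_sym.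
    have := approx s2 s20 s2L. lra.
have step : forall a b, 0 <= a -> a <= b -> b <= T1 -> b - a <= T0 ->
    `|(g b - b) - (g a - a)| <= 2 * dl.
  move=> a b a0 ab bT1 baT0.
  pose n := floor ((a + t0) / T0).
  have := floor_itv ((a + t0) / T0); rewrite -/n intrD1 => /andP[hn1 hn2].
  rewrite ler_pdivlMr // in hn1. rewrite ltr_pdivrMr // mulrDl mul1r in hn2.
  pose be := n%:~R * T0 + T0 - t0.
  have beE : be = n%:~R * T0 + T0 - t0 by [].
  clearbody be.
  have orbA : forall s, 0 <= s -> a + s < be -> xi (a + s + t0) = phi s (xi (a + t0)).
    move=> s s0 hs; apply: (chunk n) => //; lra.
  case: (leP b be) => hb.
    have := core a (b - a) a0 (ltac:(lra)) (ltac:(lra)) baT0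
      (fun s s0 sL => orbA s s0 (ltac:(lra))) (b - a) (ltac:(lra)) (lexx _).
    have -> : a + (b - a) = b by lra.
    move=> h1; have : `|g b - b - (g a - a)| = `|g b - g a - (b - a)| by congr (`|_|); lra.
    move=> ->; lra.
  have h1 := core a (be - a) a0 (ltac:(lra)) (ltac:(lra)) (ltac:(lra))
      (fun s s0 sL => orbA s s0 (ltac:(lra))) (be - a) (ltac:(lra)) (lexx _).
  have eb : a + (be - a) = be by lra.
  rewrite eb in h1.
  have orbB : forall s, 0 <= s -> s < b - be -> xi (be + s + t0) = phi s (xi (be + t0)).
    move=> s s0 hs; apply: (chunk (n + 1)) => //; rewrite intrD1; lra.
  have abe : a < be by lra.
  have q1 : 0 <= be by lra.
  have q2 : 0 <= b - be by lra.
  have q3 : be + (b - be) <= T1 by lra.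
  have q4 : b - be <= T0 by lra.
  have h2 := core be (b - be) q1 q2 q3 q4
      orbB (b - be) (ltac:(lra)) (lexx _).
  have eb2 : be + (b - be) = b by lra.
  rewrite eb2 in h2.
  have e' : g b - b - (g a - a) = (g b - g be - (b - be)) + (g be - g a - (be - a)) by lra.
  rewrite e'; apply: le_trans (ler_normD _ _) _; lra.
have [D [D0 [DT1 [Dlip Dclose]]]] := @mcshane R (fun t => g t - t) T0 T1 dl T00 T0T1
   (ltac:(lra)) (ltac:(by rewrite /= g0 subr0)) step.
have kb : 4 * dl / T0 <= e / 2 by rewrite ler_pdivrMr //; lra.
have k0 : 0 <= 4 * dl / T0 by rewrite divr_ge0 //; lra.
exists (fun t => t + D t).
split.
  split.
    apply: (@rep_of_lip _ _ (4 * dl / T0)) => //; first lra.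
    move=> a b ba.
    have -> : a + D a - (b + D b) - (a - b) = D a - D b by lra.
    by rewrite -(gtr0_norm (x := a - b)) ?subr_gt0.
  move=> a b ba.
  have ab0 : 0 < a - b by rewrite subr_gt0.
  have abn : a - b != 0 by rewrite gt_eqF.
  have -> : (a + D a - (b + D b)) / (a - b) - 1 = (D a - D b) / (a - b) by field.
  rewrite normrM normfV (gtr0_norm ab0) ltr_pdivrMr //.
  have := Dlip a b; rewrite (gtr0_norm ab0) => hl.
  have : 4 * dl / T0 * (a - b) < eps * (a - b) by rewrite ltr_pM2r //; lra.
  lra.
split; first by rewrite D0 addr0 g0.
split; first by rewrite DT1 /= addrC subrK.
move=> t ht.
have [cl _] := hyp t ht.
have hD := Dclose t ht. simpl in hD.
pose Y := phi (g t) y.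
have eY : phi (t + D t) y = phi (t + D t - g t) Y by rewrite /Y -phiD subrK.
rewrite eY.
have hr : `|0 - (t + D t - g t)| < rho2.
  have -> : 0 - (t + D t - g t) = - (D t - (g t - t)) by lra.
  rewrite normrN; lra.
have := Hr2 0 (t + D t - g t) Y Y (ltac:(rewrite normr0; lra)) hr (ltac:(rewrite mdistxx //)).
rewrite phi0 => h2.
have := metric_triangle (xi (t + t0)) Y (phi (t + D t - g t) Y).
rewrite -/Y in cl. lra.
Qed.
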